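(* Let $V\in L^1(\mathbb{R})$ (so $\widehat V\in L^\infty$), $s\ge1$, $N>1$. On $\Gamma_4=\{(\xi_1,\dots,\xi_4)\in\mathbb{R}^4:\xi_1+\xi_2+\xi_3+\xi_4=0\}$ define $$\Psi:=c\,\frac{\big((\theta(\xi_1))^2-(\theta(\xi_2))^2+(\theta(\xi_3))^2-(\theta(\xi_4))^2\big)\widehat V(\xi_3+\xi_4)}{\xi_1^2-\xi_2^2+\xi_3^2-\xi_4^2}$$ when the denominator is nonzero and $\Psi:=0$ otherwise, where $c$ is a fixed real constant. Suppose $|\xi_j|\sim N_j$ for dyadic integers $N_j\ge1$, $j=1,\dots,4$, and let $N_1^*\ge N_2^*\ge N_3^*\ge N_4^*$ be the decreasing rearrangement of $N_1,\dots,N_4$. Then, with implicit constants independent of $N$: (i) if $N_2^*\gg N_3^*$, then $|\Psi|\lesssim\frac{1}{(N_1^* )^2}\theta(N_1^* )\theta(N_2^* )$; (ii) if $N_2^*\sim N_3^*$, then $|\Psi|\lesssim\frac{1}{(N_1^* )^3}\theta(N_1^* )\theta(N_2^* )N_3^*N_4^*$.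
   Context: $\theta(\xi)=\theta_0(\xi/N)$, where $\theta_0$ is a fixed even smooth function, non-decreasing on $[0,\infty)$, with $\theta_0(\xi)=|\xi|^s$ for $|\xi|\ge2$ and $\theta_0(\xi)=1$ for $|\xi|\le1$. Dyadic localization $|\xi_j|\sim N_j$ means $N_j/2\le|\xi_j|\le2N_j$ (with $|\xi_j|\lesssim1$ when $N_j=1$). On $\Gamma_4$ necessarily $N_1^*\sim N_2^*$. *)

(* Defs.v *)
From Stdlib Require Import Reals Lra List Permutation.
Open Scope R_scope.

Definition smooth (f : R -> R) : Prop :=
  exists D : nat -> R -> R, D O = f /\
    forall (n : nat) (x : R), derivable_pt_lim (D n) x (D (S n) x).

Definition admissible_theta0 (s : R) (th0 : R -> R) : Prop :=
  smooth th0 /\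
  (forall x, th0 (- x) = th0 x) /\
  (forall x y, 0 <= x -> x <= y -> th0 x <= th0 y) /\
  (forall x, 2 <= Rabs x -> th0 x = Rpower (Rabs x) s) /\
  (forall x, Rabs x <= 1 -> th0 x = 1).

Definition theta (th0 : R -> R) (N x : R) : R := th0 (x / N).

(* The real multiplier of Vhat(xi3+xi4) in Psi (0 when the denominator vanishes). *)
Definition Psi_mult (th0 : R -> R) (c N x1 x2 x3 x4 : R) : R :=
  let d := x1 ^ 2 - x2 ^ 2 + x3 ^ 2 - x4 ^ 2 in
  if Req_EM_T d 0 then 0
  else c * ((theta th0 N x1) ^ 2 - (theta th0 N x2) ^ 2
            + (theta th0 N x3) ^ 2 - (theta th0 N x4) ^ 2) / d.

(* |Psi|, where Vhat is complex-valued, given by its real and imaginary parts. *)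
Definition Psi_abs (th0 : R -> R) (c N : R) (Vre Vim : R -> R)
    (x1 x2 x3 x4 : R) : R :=
  let m := Psi_mult th0 c N x1 x2 x3 x4 in
  sqrt ((m * Vre (x3 + x4)) ^ 2 + (m * Vim (x3 + x4)) ^ 2).

(* Dyadic localization |x| ~ 2^k: 2^k/2 <= |x| <= 2*2^k, and |x| <= 2 for k = 0. *)
Definition dyadic_loc (k : nat) (x : R) : Prop :=
  match k with
  | O => Rabs x <= 2
  | S _ => 2 ^ k / 2 <= Rabs x <= 2 * 2 ^ k
  end.

(* Main.v *)
Require Import Defs.
From Stdlib Require Import Reals Lra Lia Psatz List Permutation.
Open Scope R_scope.

Lemma dpl_ext : forall f g x l l', (forall y, f y = g y) -> l = l' ->
  derivable_pt_lim g x l -> derivable_pt_lim f x l'.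
Proof.
  intros f g x l l' Hfg Hl H eps Heps. subst l'.
  destruct (H eps Heps) as [d Hd]. exists d. intros h Hh Hhd.
  rewrite !Hfg. apply Hd; auto.
Qed.

Lemma dpl_loc_r : forall f g a x l, (forall y, a < y -> f y = g y) -> a < x ->
  derivable_pt_lim g x l -> derivable_pt_lim f x l.
Proof.
  intros f g a x l Hfg Hx H eps Heps.
  destruct (H eps Heps) as [d Hd].
  assert (Hp : 0 < Rmin d (x - a)). { apply Rmin_pos; [apply cond_pos|lra]. }
  exists (mkposreal _ Hp). simpl. intros h Hh Hhd.
  assert (Hd1 : Rabs h < d) by (eapply Rlt_le_trans; [apply Hhd|apply Rmin_l]).
  assert (Hd2 : Rabs h < x - a) by (eapply Rlt_le_trans; [apply Hhd|apply Rmin_r]).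
  rewrite (Hfg x) by lra. rewrite (Hfg (x+h)).
  - apply Hd; auto.
  - apply Rabs_def2 in Hd2. lra.
Qed.

Lemma dpl_loc_l : forall f g a x l, (forall y, y < a -> f y = g y) -> x < a ->
  derivable_pt_lim g x l -> derivable_pt_lim f x l.
Proof.
  intros f g a x l Hfg Hx H eps Heps.
  destruct (H eps Heps) as [d Hd].
  assert (Hp : 0 < Rmin d (a - x)). { apply Rmin_pos; [apply cond_pos|lra]. }
  exists (mkposreal _ Hp). simpl. intros h Hh Hhd.
  assert (Hd1 : Rabs h < d) by (eapply Rlt_le_trans; [apply Hhd|apply Rmin_l]).
  assert (Hd2 : Rabs h < a - x) by (eapply Rlt_le_trans; [apply Hhd|apply Rmin_r]).
  rewrite (Hfg x) by lra. rewrite (Hfg (x+h)).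
  - apply Hd; auto.
  - apply Rabs_def2 in Hd2. lra.
Qed.

Lemma MVT_gen : forall f f' p q, (forall c, derivable_pt_lim f c (f' c)) ->
  exists c, Rmin p q <= c <= Rmax p q /\ f q - f p = f' c * (q - p).
Proof.
  intros f f' p q Hd.
  destruct (Rtotal_order p q) as [H|[H|H]].
  - destruct (MVT_cor2 f f' p q H (fun c _ => Hd c)) as [c [Hc1 Hc2]].
    exists c. split; [|auto]. unfold Rmin, Rmax; destruct (Rle_dec p q); lra.
  - subst. exists q. split; [unfold Rmin, Rmax; destruct (Rle_dec q q); lra| ring].
  - destruct (MVT_cor2 f f' q p H (fun c _ => Hd c)) as [c [Hc1 Hc2]].
    exists c. split.
    + unfold Rmin, Rmax; destruct (Rle_dec p q); lra.
    + replace (f q - f p) with (- (f p - f q)) by ring. rewrite Hc1. ring.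
Qed.

Lemma Rabs_le_inv : forall a b, Rabs a <= b -> - b <= a <= b.
Proof. intros a b H. unfold Rabs in H. destruct (Rcase_abs a); lra. Qed.

Lemma dpl_pow_pos : forall r u, 0 < u ->
  derivable_pt_lim (fun y => Rpower y r) u (r * Rpower u (r - 1)).
Proof. intros; apply derivable_pt_lim_power; auto. Qed.

Lemma dpl_pow_neg : forall r u, u < 0 ->
  derivable_pt_lim (fun y => Rpower (- y) r) u (- (r * Rpower (- u) (r - 1))).
Proof.
  intros r u Hu.
  apply dpl_ext with (g := comp (fun y => Rpower y r) (opp_fct id))
    (l := r * Rpower (- u) (r - 1) * (-1)).
  - intros; reflexivity.
  - ring.
  - apply derivable_pt_lim_comp.
    + apply derivable_pt_lim_opp_fwd. apply dpl_ext with (g := id) (l := 1).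
      * intros; reflexivity.
      * ring.
      * apply derivable_pt_lim_id.
    + unfold opp_fct, id. apply derivable_pt_lim_power. lra.
Qed.

Lemma th0_props : forall s th0, admissible_theta0 s th0 ->
  (forall x, 1 <= th0 x) /\
  (forall x y, 0 <= x -> x <= y -> th0 x <= th0 y) /\
  (forall x, 2 < x -> th0 x = Rpower x s) /\
  (forall x, x < -2 -> th0 x = Rpower (- x) s) /\
  (forall x, th0 (- x) = th0 x).
Proof.
  intros s th0 [Hsm [Hev [Hmo [Hpw Hone]]]].
  assert (H0 : th0 0 = 1) by (apply Hone; rewrite Rabs_R0; lra).
  split; [|split; [auto|split; [|split; [|auto]]]].
  - intros x. destruct (Rle_dec 0 x).
    + rewrite <- H0. apply Hmo; lra.
    + rewrite <- Hev. rewrite <- H0. apply Hmo; lra.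
  - intros x Hx. rewrite Hpw; rewrite Rabs_right; lra.
  - intros x Hx. rewrite Hpw; [rewrite Rabs_left; [reflexivity|lra]|].
    rewrite Rabs_left; lra.
Qed.

Lemma D_formulas : forall s th0 (D : nat -> R -> R), admissible_theta0 s th0 ->
  D O = th0 -> (forall n x, derivable_pt_lim (D n) x (D (S n) x)) ->
  (forall u, 2 < u -> D 1%nat u = s * Rpower u (s - 1) /\
                      D 2%nat u = s * ((s - 1) * Rpower u (s - 1 - 1))) /\
  (forall u, u < -2 -> D 1%nat u = - (s * Rpower (- u) (s - 1)) /\
                      D 2%nat u = - (s * - ((s - 1) * Rpower (- u) (s - 1 - 1)))).
Proof.
  intros s th0 D Hadm HD0 HD.
  destruct (th0_props s th0 Hadm) as [_ [_ [Hr [Hl _]]]].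
  assert (E1r : forall u, 2 < u -> D 1%nat u = s * Rpower u (s - 1)).
  { intros u Hu. apply (uniqueness_limite (D O) u).
    - apply HD.
    - rewrite HD0. apply (dpl_loc_r th0 (fun y => Rpower y s) 2 u); auto.
      apply dpl_pow_pos; lra. }
  assert (E1l : forall u, u < -2 -> D 1%nat u = - (s * Rpower (- u) (s - 1))).
  { intros u Hu. apply (uniqueness_limite (D O) u).
    - apply HD.
    - rewrite HD0. apply (dpl_loc_l th0 (fun y => Rpower (- y) s) (-2) u); auto.
      apply dpl_pow_neg; lra. }
  split.
  - intros u Hu. split; [auto|].
    apply (uniqueness_limite (D 1%nat) u); [apply HD|].
    apply (dpl_loc_r (D 1%nat) (mult_real_fct s (fun y => Rpower y (s - 1))) 2 u).
    + intros y Hy. unfold mult_real_fct. rewrite E1r; auto.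
    + auto.
    + apply derivable_pt_lim_scal. apply dpl_pow_pos; lra.
  - intros u Hu. split; [auto|].
    apply (uniqueness_limite (D 1%nat) u); [apply HD|].
    apply (dpl_loc_l (D 1%nat) (opp_fct (mult_real_fct s (fun y => Rpower (- y) (s - 1)))) (-2) u).
    + intros y Hy. unfold opp_fct, mult_real_fct. rewrite E1l; auto.
    + auto.
    + apply derivable_pt_lim_opp. apply derivable_pt_lim_scal. apply dpl_pow_neg; lra.
Qed.

Definition hfun (D : nat -> R -> R) (th0 : R -> R) (u : R) : R :=
  2 * Rabs (D 1%nat u * D 1%nat u + th0 u * D 2%nat u).

Lemma hfun_cont : forall th0 (D : nat -> R -> R),
  D O = th0 -> (forall n x, derivable_pt_lim (D n) x (D (S n) x)) ->
  forall c, continuity_pt (hfun D th0) c.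
Proof.
  intros th0 D HD0 HD c.
  assert (Hc : forall n, continuity_pt (D n) c).
  { intros n. apply derivable_continuous_pt. exists (D (S n) c). apply HD. }
  assert (Hc0 : continuity_pt th0 c) by (rewrite <- HD0; apply Hc).
  assert (H : continuity_pt (mult_real_fct 2 (comp Rabs (plus_fct (mult_fct (D 1%nat) (D 1%nat)) (mult_fct th0 (D 2%nat))))) c).
  { apply continuity_pt_scal. apply continuity_pt_comp.
    - apply continuity_pt_plus; apply continuity_pt_mult; auto.
    - apply Rcontinuity_abs. }
  exact H.
Qed.

Lemma T_ge : forall s th0, admissible_theta0 s th0 -> forall U, 0 < U -> U <= 3 ->
  1/9 <= th0 U ^ 2 / U ^ 2.
Proof.
  intros s th0 Hadm U HU HU3.
  destruct (th0_props s th0 Hadm) as [Hge _].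
  pose proof (Hge U).
  assert (HU2 : 0 < U ^ 2) by (apply pow_lt; lra).
  set (T := th0 U ^ 2 / U ^ 2).
  assert (HT : T * U ^ 2 = th0 U ^ 2) by (unfold T; field; lra).
  assert (1 <= th0 U ^ 2) by nra.
  assert (U ^ 2 <= 9) by nra.
  nra.
Qed.

Lemma T_eq : forall s th0, admissible_theta0 s th0 -> forall U, 2 < U ->
  th0 U ^ 2 / U ^ 2 = Rpower U (2 * s - 2).
Proof.
  intros s th0 Hadm U HU.
  destruct (th0_props s th0 Hadm) as [_ [_ [Hr _]]].
  rewrite Hr by lra.
  assert (E2 : U ^ 2 = Rpower U 2).
  { rewrite <- Rpower_pow by lra. reflexivity. }
  rewrite E2.
  assert (E : Rpower U s ^ 2 = Rpower U (2 * s - 2) * Rpower U 2).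
  { rewrite <- Rpower_plus. simpl. rewrite Rmult_1_r, <- Rpower_plus. f_equal; ring. }
  rewrite E. field. unfold Rpower. apply Rgt_not_eq, exp_pos.
Qed.

Lemma hfun_outer : forall s th0 (D : nat -> R -> R), admissible_theta0 s th0 ->
  D O = th0 -> (forall n x, derivable_pt_lim (D n) x (D (S n) x)) ->
  forall u, 2 < Rabs u -> hfun D th0 u = 2 * Rabs (s * (2 * s - 1)) * Rpower (Rabs u) (2 * s - 2).
Proof.
  intros s th0 D Hadm HD0 HD u Hu.
  destruct (th0_props s th0 Hadm) as [_ [_ [Hr [Hl _]]]].
  destruct (D_formulas s th0 D Hadm HD0 HD) as [Fr Fl].
  assert (Key : forall v, 0 < v -> Rpower v (s - 1) * Rpower v (s - 1) = Rpower v (2 * s - 2) /\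
                   Rpower v s * Rpower v (s - 1 - 1) = Rpower v (2 * s - 2)).
  { intros v Hv. rewrite <- !Rpower_plus. split; f_equal; ring. }
  assert (Zpos : forall v, 0 <= Rpower v (2 * s - 2)).
  { intros v. unfold Rpower. left. apply exp_pos. }
  unfold hfun. destruct (Rle_dec 0 u).
  - rewrite (Rabs_right u) in Hu |- * by lra.
    destruct (Fr u Hu) as [E1 E2]. rewrite E1, E2, (Hr u Hu).
    destruct (Key u) as [K1 K2]; [lra|].
    replace (s * Rpower u (s - 1) * (s * Rpower u (s - 1)) + Rpower u s * (s * ((s - 1) * Rpower u (s - 1 - 1))))
      with (s * s * (Rpower u (s - 1) * Rpower u (s - 1)) + s * (s - 1) * (Rpower u s * Rpower u (s - 1 - 1))) by ring.
    rewrite K1, K2. replace (s * s * Rpower u (2 * s - 2) + s * (s - 1) * Rpower u (2 * s - 2)) with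
      ((s * (2 * s - 1)) * Rpower u (2 * s - 2)) by ring.
    rewrite Rabs_mult, (Rabs_right (Rpower u _)) by (apply Rle_ge; apply Zpos). ring.
  - rewrite (Rabs_left u) in Hu |- * by lra.
    assert (Hu' : u < -2) by lra.
    destruct (Fl u Hu') as [E1 E2]. rewrite E1, E2, (Hl u Hu').
    destruct (Key (- u)) as [K1 K2]; [lra|].
    replace (- (s * Rpower (- u) (s - 1)) * - (s * Rpower (- u) (s - 1)) + Rpower (- u) s * - (s * - ((s - 1) * Rpower (- u) (s - 1 - 1))))
      with (s * s * (Rpower (- u) (s - 1) * Rpower (- u) (s - 1)) + s * (s - 1) * (Rpower (- u) s * Rpower (- u) (s - 1 - 1))) by ring.
    rewrite K1, K2. replace (s * s * Rpower (- u) (2 * s - 2) + s * (s - 1) * Rpower (- u) (2 * s - 2)) with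
      ((s * (2 * s - 1)) * Rpower (- u) (2 * s - 2)) by ring.
    rewrite Rabs_mult, (Rabs_right (Rpower (- u) _)) by (apply Rle_ge; apply Zpos). ring.
Qed.

Lemma hfun_bound : forall s th0 (D : nat -> R -> R), 1 <= s -> admissible_theta0 s th0 ->
  D O = th0 -> (forall n x, derivable_pt_lim (D n) x (D (S n) x)) ->
  exists C0, 0 <= C0 /\ forall u U, 0 < U -> Rabs u <= U ->
    hfun D th0 u <= C0 * (th0 U ^ 2 / U ^ 2).
Proof.
  intros s th0 D Hs Hadm HD0 HD.
  destruct (continuity_ab_maj (hfun D th0) (-3) 3) as [Mx [HMx _]]; [lra| |].
  { intros c _. apply hfun_cont; auto. }
  set (H' := Rmax (hfun D th0 Mx) 0).
  set (A := 2 * Rabs (s * (2 * s - 1))).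
  assert (HA : 0 <= A) by (unfold A; pose proof (Rabs_pos (s * (2 * s - 1))); lra).
  assert (HH' : 0 <= H') by (unfold H'; apply Rmax_r).
  exists (9 * H' + A). split; [lra|].
  intros u U HU Hu.
  assert (HT : 1/9 <= th0 U ^ 2 / U ^ 2).
  { destruct (Rle_dec U 3).
    - apply (T_ge s); auto.
    - rewrite (T_eq s) by (auto; lra).
      rewrite <- (Rpower_O U) by lra. apply Rle_trans with (Rpower U 0); [rewrite Rpower_O; lra|].
      apply Rle_Rpower; lra. }
  set (T := th0 U ^ 2 / U ^ 2) in *.
  destruct (Rle_dec (Rabs u) 3).
  - assert (hfun D th0 u <= H').
    { apply Rle_trans with (hfun D th0 Mx); [apply HMx; apply Rabs_le_inv in r; lra|apply Rmax_l]. }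
    nra.
  - rewrite (hfun_outer s th0 D) by (auto; lra).
    assert (Rpower (Rabs u) (2 * s - 2) <= T).
    { unfold T. rewrite (T_eq s) by (auto; lra). apply Rle_Rpower_l; [lra|lra]. }
    fold A. nra.
Qed.

Definition ff (th0 : R -> R) (N y : R) := theta th0 N y ^ 2.
Definition ff1 (D : nat -> R -> R) (N y : R) := 2 * D O (y / N) * D 1%nat (y / N) / N.
Definition ff2 (D : nat -> R -> R) (N y : R) :=
  2 * (D 1%nat (y / N) * D 1%nat (y / N) + D O (y / N) * D 2%nat (y / N)) / (N * N).

Lemma dpl_Dn : forall (D : nat -> R -> R) N, N <> 0 ->
  (forall n x, derivable_pt_lim (D n) x (D (S n) x)) ->
  forall n x, derivable_pt_lim (fun y => D n (y / N)) x (D (S n) (x / N) / N).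
Proof.
  intros D N HN HD n x.
  apply dpl_ext with (g := comp (D n) (fun y => id y * / N)) (l := D (S n) (x / N) * (1 * / N)).
  - intros; reflexivity.
  - field; auto.
  - apply derivable_pt_lim_comp.
    + apply derivable_pt_lim_scal_right. apply derivable_pt_lim_id.
    + apply HD.
Qed.

Lemma dpl_ff : forall th0 (D : nat -> R -> R) N, N <> 0 -> D O = th0 ->
  (forall n x, derivable_pt_lim (D n) x (D (S n) x)) ->
  forall x, derivable_pt_lim (ff th0 N) x (ff1 D N x).
Proof.
  intros th0 D N HN HD0 HD x.
  apply dpl_ext with (g := mult_fct (fun y => D O (y / N)) (fun y => D O (y / N)))
    (l := D 1%nat (x / N) / N * D O (x / N) + D O (x / N) * (D 1%nat (x / N) / N)).
  - intros y. unfold ff, theta, mult_fct. rewrite HD0. ring.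
  - unfold ff1. field; auto.
  - apply (derivable_pt_lim_mult (fun y => D O (y / N)) (fun y => D O (y / N))); apply (dpl_Dn D N HN HD O).
Qed.

Lemma dpl_ff1 : forall (D : nat -> R -> R) N, N <> 0 ->
  (forall n x, derivable_pt_lim (D n) x (D (S n) x)) ->
  forall x, derivable_pt_lim (ff1 D N) x (ff2 D N x).
Proof.
  intros D N HN HD x.
  apply dpl_ext with (g := mult_real_fct (2 / N) (mult_fct (fun y => D O (y / N)) (fun y => D 1%nat (y / N))))
    (l := 2 / N * (D 1%nat (x / N) / N * D 1%nat (x / N) + D O (x / N) * (D 2%nat (x / N) / N))).
  - intros y. unfold ff1, mult_real_fct, mult_fct. field; auto.
  - unfold ff2. field; auto.
  - apply derivable_pt_lim_scal. apply (derivable_pt_lim_mult (fun y => D O (y / N)) (fun y => D 1%nat (y / N))); [apply (dpl_Dn D N HN HD O)|apply (dpl_Dn D N HN HD 1%nat)].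
Qed.

Lemma between : forall p q c B, Rmin p q <= c <= Rmax p q -> -B <= p <= B -> -B <= q <= B -> -B <= c <= B.
Proof. intros p q c B H1 H2 H3. unfold Rmin, Rmax in H1. destruct (Rle_dec p q); lra. Qed.

Lemma between_shift : forall p q c b, Rmin p q <= c <= Rmax p q -> Rmin (p - b) (q - b) <= c - b <= Rmax (p - b) (q - b).
Proof. intros p q c b H1. unfold Rmin, Rmax in *. destruct (Rle_dec p q); destruct (Rle_dec (p - b) (q - b)); lra. Qed.

Lemma double_diff : forall th0 (D : nat -> R -> R) N, N <> 0 -> D O = th0 ->
  (forall n x, derivable_pt_lim (D n) x (D (S n) x)) ->
  forall B x a b, -B <= x <= B -> -B <= x - a <= B -> -B <= x - b <= B -> -B <= x - a - b <= B ->
  exists e, -B <= e <= B /\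
    ff th0 N x - ff th0 N (x - a) - ff th0 N (x - b) + ff th0 N (x - a - b) = a * b * ff2 D N e.
Proof.
  intros th0 D N HN HD0 HD B x a b H1 H2 H3 H4.
  set (k := fun t => ff th0 N t - ff th0 N (t - b)).
  set (k' := fun t => ff1 D N t - ff1 D N (t - b)).
  assert (Hk : forall t, derivable_pt_lim k t (k' t)).
  { intros t. unfold k, k'.
    apply dpl_ext with (g := minus_fct (ff th0 N) (comp (ff th0 N) (fun t => id t - fct_cte b t)))
      (l := ff1 D N t - ff1 D N (t - b) * (1 - 0)).
    - intros; reflexivity.
    - ring.
    - apply derivable_pt_lim_minus.
      + apply dpl_ff; auto.
      + apply derivable_pt_lim_comp.
        * apply (derivable_pt_lim_minus id (fct_cte b)).
          -- apply derivable_pt_lim_id.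
          -- apply derivable_pt_lim_const.
        * apply dpl_ff; auto. }
  destruct (MVT_gen k k' (x - a) x Hk) as [c [Hc Ec]].
  destruct (MVT_gen (ff1 D N) (ff2 D N) (c - b) c (dpl_ff1 D N HN HD)) as [e [He Ee]].
  exists e. split.
  - assert (Hc1 : -B <= c <= B) by (eapply between; eauto).
    pose proof (between_shift _ _ _ b Hc) as Hcb.
    replace (x - a - b) with ((x - a) - b) in H4 by ring.
    assert (Hc2 : -B <= c - b <= B) by (eapply between; eauto).
    eapply between; eauto.
  - unfold k, k' in Ec.
    replace (x - a - b) with ((x - a) - b) by ring.
    replace (ff th0 N x - ff th0 N (x - a) - ff th0 N (x - b) + ff th0 N (x - a - b))
      with ((ff th0 N x - ff th0 N (x - b)) - (ff th0 N (x - a) - ff th0 N (x - a - b))) by ring.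
    replace (x - a - b) with ((x - a) - b) by ring.
    rewrite Ec. unfold k'. rewrite Ee. ring.
Qed.

Lemma psi_mult_bound : forall s th0, 1 <= s -> admissible_theta0 s th0 ->
  exists C0, 0 <= C0 /\ forall c N x1 x2 x3 x4 B, 1 < N -> x1 + x2 + x3 + x4 = 0 -> 0 < B ->
    Rabs x1 <= B -> Rabs x2 <= B -> Rabs x3 <= B -> Rabs x4 <= B ->
    Rabs (Psi_mult th0 c N x1 x2 x3 x4) <= Rabs c * C0 * (theta th0 N B ^ 2 / B ^ 2).
Proof.
  intros s th0 Hs Hadm.
  destruct Hadm as [[D [HD0 HD]] Hrest] eqn:Hadm'.
  clear Hadm'.
  assert (Hadm2 : admissible_theta0 s th0) by (split; [exists D; auto|auto]).
  destruct (hfun_bound s th0 D Hs Hadm2 HD0 HD) as [C0 [HC0 Hb]].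
  destruct (th0_props s th0 Hadm2) as [Hge [_ [_ [_ Hev]]]].
  exists C0. split; auto.
  intros c N x1 x2 x3 x4 B HN Hsum HB H1 H2 H3 H4.
  assert (HNz : N <> 0) by lra.
  assert (Hnn : 0 <= Rabs c * C0 * (theta th0 N B ^ 2 / B ^ 2)).
  { apply Rmult_le_pos; [apply Rmult_le_pos; auto; apply Rabs_pos|].
    unfold Rdiv. apply Rmult_le_pos; [apply pow2_ge_0|]. left. apply Rinv_0_lt_compat. apply pow_lt; auto. }
  unfold Psi_mult. destruct (Req_EM_T _ 0) as [Hd|Hd].
  { rewrite Rabs_R0; auto. }
  apply Rabs_le_inv in H1. apply Rabs_le_inv in H2. apply Rabs_le_inv in H3. apply Rabs_le_inv in H4.
  destruct (double_diff th0 D N HNz HD0 HD B x1 (x1 + x2) (x1 + x4)) as [e [He Ee]]; try lra.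
  assert (Ev : forall y, theta th0 N (- y) = theta th0 N y).
  { intros y. unfold theta. replace (- y / N) with (- (y / N)) by (field; auto). apply Hev. }
  assert (Hnum : theta th0 N x1 ^ 2 - theta th0 N x2 ^ 2 + theta th0 N x3 ^ 2 - theta th0 N x4 ^ 2
                 = (x1 + x2) * (x1 + x4) * ff2 D N e).
  { rewrite <- Ee. unfold ff.
    replace (x1 - (x1 + x2)) with (- x2) by ring.
    replace (x1 - (x1 + x4)) with (- x4) by ring.
    replace (- x2 - (x1 + x4)) with x3 by lra.
    rewrite !Ev. ring. }
  assert (Hden : x1 ^ 2 - x2 ^ 2 + x3 ^ 2 - x4 ^ 2 = 2 * ((x1 + x2) * (x1 + x4))).
  { replace x3 with (- x1 - x2 - x4) by lra. ring. }
  rewrite Hnum. rewrite Hden in *.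
  assert (Hab : (x1 + x2) * (x1 + x4) <> 0) by (intro Z; apply Hd; try rewrite Hden; rewrite Z; ring).
  replace (c * ((x1 + x2) * (x1 + x4) * ff2 D N e) / (2 * ((x1 + x2) * (x1 + x4))))
    with (c * (ff2 D N e / 2)).
  2: { field. split; intro Z; apply Hab; rewrite Z; ring. }
  rewrite Rabs_mult, (Rmult_assoc (Rabs c)). apply Rmult_le_compat_l; [apply Rabs_pos|].
  assert (Eh : Rabs (ff2 D N e) = hfun D th0 (e / N) / (N * N)).
  { unfold ff2, hfun. rewrite HD0. unfold Rdiv. rewrite Rabs_mult, Rabs_mult.
    rewrite (Rabs_right 2) by lra. rewrite (Rabs_right (/ (N * N))); [ring|].
    apply Rle_ge. left. apply Rinv_0_lt_compat. nra. }
  assert (Hu : Rabs (e / N) <= B / N).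
  { unfold Rdiv. rewrite Rabs_mult. rewrite (Rabs_right (/ N)) by (apply Rle_ge; left; apply Rinv_0_lt_compat; lra).
    apply Rmult_le_compat_r; [left; apply Rinv_0_lt_compat; lra|]. apply Rabs_le. lra. }
  assert (HBN : 0 < B / N) by (apply Rdiv_lt_0_compat; lra).
  pose proof (Hb (e / N) (B / N) HBN Hu) as Hh.
  assert (Et : th0 (B / N) ^ 2 / (B / N) ^ 2 / (N * N) = theta th0 N B ^ 2 / B ^ 2).
  { unfold theta. field. split; lra. }
  unfold Rdiv at 1. rewrite Rabs_mult, Eh. rewrite (Rabs_right (/ 2)) by lra.
  rewrite <- Et.
  assert (HNN : 0 < N * N) by nra.
  assert (hfun D th0 (e / N) / (N * N) <= C0 * (th0 (B / N) ^ 2 / (B / N) ^ 2) / (N * N)).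
  { unfold Rdiv at 1 3. apply Rmult_le_compat_r; [left; apply Rinv_0_lt_compat; lra| auto]. }
  assert (0 <= hfun D th0 (e / N) / (N * N)).
  { unfold hfun. unfold Rdiv. apply Rmult_le_pos; [pose proof (Rabs_pos (D 1%nat (e / N) * D 1%nat (e / N) + th0 (e / N) * D 2%nat (e / N))); lra|left; apply Rinv_0_lt_compat; auto]. }
  replace (C0 * (th0 (B / N) ^ 2 / (B / N) ^ 2 / (N * N))) with (C0 * (th0 (B / N) ^ 2 / (B / N) ^ 2) / (N * N)) by (field; split; lra).
  lra.
Qed.

Lemma perm4 : forall a b c d M1 M2 M3 M4 : R,
  Permutation (a :: b :: c :: d :: nil) (M1 :: M2 :: M3 :: M4 :: nil) ->
  M2 <= M1 -> M3 <= M2 -> M4 <= M3 ->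
  (M4 <= a <= M1 /\ M4 <= b <= M1 /\ M4 <= c <= M1 /\ M4 <= d <= M1) /\
  (a = M4 \/ b = M4 \/ c = M4 \/ d = M4) /\
  ((a = M1 /\ b <= M2 /\ c <= M2 /\ d <= M2) \/ (b = M1 /\ a <= M2 /\ c <= M2 /\ d <= M2) \/
   (c = M1 /\ a <= M2 /\ b <= M2 /\ d <= M2) \/ (d = M1 /\ a <= M2 /\ b <= M2 /\ c <= M2)).
Proof.
  intros a b c d M1 M2 M3 M4 HP H21 H32 H43.
  assert (Hin : forall z, In z (a :: b :: c :: d :: nil) -> M4 <= z <= M1).
  { intros z Hz. apply (Permutation_in _ HP) in Hz. simpl in Hz.
    destruct Hz as [E|[E|[E|[E|[]]]]]; subst; lra. }
  split.
  { repeat split; apply Hin; simpl; tauto. }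
  split.
  { assert (In M4 (a :: b :: c :: d :: nil)).
    { apply (Permutation_in _ (Permutation_sym HP)). simpl; tauto. }
    simpl in H. destruct H as [E|[E|[E|[E|[]]]]]; subst; tauto. }
  destruct (Permutation_vs_cons_inv HP) as [l1 [l2 El]].
  assert (HP2 : Permutation (M2 :: M3 :: M4 :: nil) (l1 ++ l2)).
  { apply (Permutation_cons_app_inv l1 l2 (a := M1)). rewrite <- El. apply Permutation_sym; auto. }
  assert (Hle : forall z, In z (l1 ++ l2) -> z <= M2).
  { intros z Hz. apply (Permutation_in _ (Permutation_sym HP2)) in Hz. simpl in Hz.
    destruct Hz as [E|[E|[E|[]]]]; subst; lra. }
  destruct l1 as [|x1 [|x2 [|x3 [|x4 l1]]]]; simpl in El; inversion El; subst;
  simpl in Hle.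
  - left. repeat split; apply Hle; tauto.
  - right; left. repeat split; apply Hle; tauto.
  - right; right; left. repeat split; apply Hle; tauto.
  - right; right; right. repeat split; apply Hle; tauto.
  - destruct l1; discriminate.
Qed.

Lemma dy_up : forall k x, dyadic_loc k x -> 2 ^ k <= 1 + 2 * Rabs x.
Proof.
  intros [|k] x H; simpl in *.
  - pose proof (Rabs_pos x); lra.
  - destruct H. lra.
Qed.

Lemma dy_low : forall k x, dyadic_loc k x -> Rabs x <= 2 * 2 ^ k.
Proof. intros [|k] x H; simpl in *; lra. Qed.

Lemma pow2_ge1 : forall k, 1 <= 2 ^ k.
Proof. intros k. apply pow_R1_Rle. lra. Qed.

Lemma Q_ge1 : forall s, 0 <= s -> 1 <= Rpower 4 s.
Proof.
  intros s Hs. rewrite <- (Rpower_O 4) by lra. apply Rle_Rpower; lra.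
Qed.

Lemma th0_double : forall s th0, 1 <= s -> admissible_theta0 s th0 ->
  forall u, 0 <= u -> th0 (2 * u) <= Rpower 4 s * th0 u.
Proof.
  intros s th0 Hs Hadm u Hu.
  destruct (th0_props s th0 Hadm) as [Hge [Hmo [Hr _]]].
  pose proof (Q_ge1 s ltac:(lra)). pose proof (Hge u).
  destruct (Rle_dec u 2).
  - apply Rle_trans with (th0 4); [apply Hmo; lra|].
    rewrite Hr by lra. nra.
  - rewrite !Hr by lra. rewrite <- Rpower_mult_distr by lra.
    apply Rmult_le_compat_r; [unfold Rpower; left; apply exp_pos|].
    apply Rle_Rpower_l; lra.
Qed.

Lemma psi_abs_le : forall th0 c N Vre Vim Mv x1 x2 x3 x4,
  (forall x, sqrt (Vre x ^ 2 + Vim x ^ 2) <= Mv) ->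
  Psi_abs th0 c N Vre Vim x1 x2 x3 x4 <= Rabs (Psi_mult th0 c N x1 x2 x3 x4) * Mv.
Proof.
  intros th0 c N Vre Vim Mv x1 x2 x3 x4 HV.
  unfold Psi_abs. set (m := Psi_mult th0 c N x1 x2 x3 x4).
  set (v := Vre (x3 + x4)). set (w := Vim (x3 + x4)).
  replace ((m * v) ^ 2 + (m * w) ^ 2) with (Rsqr m * (v ^ 2 + w ^ 2)) by (unfold Rsqr; ring).
  rewrite sqrt_mult_alt by apply Rle_0_sqr.
  rewrite sqrt_Rsqr_abs. apply Rmult_le_compat_l; [apply Rabs_pos|]. apply HV.
Qed.

Lemma Rdiv_le_0_compat : forall a b, 0 <= a -> 0 < b -> 0 <= a / b.
Proof. intros a b Ha Hb. unfold Rdiv. apply Rmult_le_pos; auto. left; apply Rinv_0_lt_compat; auto. Qed.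

Lemma core : forall s th0 c Vre Vim Mv, 1 <= s -> admissible_theta0 s th0 ->
  (forall x, sqrt (Vre x ^ 2 + Vim x ^ 2) <= Mv) ->
  exists K, 0 <= K /\
    forall (N x1 x2 x3 x4 : R) (k1 k2 k3 k4 : nat) (M1 M2 M3 M4 : R),
        1 < N ->
        x1 + x2 + x3 + x4 = 0 ->
        dyadic_loc k1 x1 -> dyadic_loc k2 x2 ->
        dyadic_loc k3 x3 -> dyadic_loc k4 x4 ->
        Permutation (2 ^ k1 :: 2 ^ k2 :: 2 ^ k3 :: 2 ^ k4 :: nil)
                    (M1 :: M2 :: M3 :: M4 :: nil) ->
        M2 <= M1 -> M3 <= M2 -> M4 <= M3 ->
        Psi_abs th0 c N Vre Vim x1 x2 x3 x4 <= K * (/ M1 ^ 2 * theta th0 N M1 * theta th0 N M2)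
        /\ M1 <= 16 * M2 /\ 1 <= M4 /\ 0 <= / M1 ^ 2 * theta th0 N M1 * theta th0 N M2.
Proof.
  intros s th0 c Vre Vim Mv Hs Hadm HV.
  destruct (psi_mult_bound s th0 Hs Hadm) as [C0 [HC0 Hpm]].
  destruct (th0_props s th0 Hadm) as [Hge [Hmo _]].
  assert (HMv : 0 <= Mv) by (eapply Rle_trans; [apply sqrt_pos|apply (HV 0)]).
  set (Q := Rpower 4 s).
  assert (HQ : 1 <= Q) by (apply Q_ge1; lra).
  exists (Mv * Rabs c * C0 * Q ^ 6 / 4). split.
  { pose proof (Rabs_pos c). pose proof (pow_le Q 6 ltac:(lra)).
    unfold Rdiv. repeat apply Rmult_le_pos; auto; lra. }
  intros N x1 x2 x3 x4 k1 k2 k3 k4 M1 M2 M3 M4 HN Hsum D1 D2 D3 D4 HP H21 H32 H43.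
  destruct (perm4 _ _ _ _ _ _ _ _ HP H21 H32 H43) as [Hr [Hm4 Hcase]].
  pose proof (pow2_ge1 k1). pose proof (pow2_ge1 k2). pose proof (pow2_ge1 k3). pose proof (pow2_ge1 k4).
  assert (HM4 : 1 <= M4) by (destruct Hm4 as [E|[E|[E|E]]]; lra).
  pose proof (dy_low _ _ D1) as L1. pose proof (dy_low _ _ D2) as L2.
  pose proof (dy_low _ _ D3) as L3. pose proof (dy_low _ _ D4) as L4.
  pose proof (dy_up _ _ D1) as U1. pose proof (dy_up _ _ D2) as U2.
  pose proof (dy_up _ _ D3) as U3. pose proof (dy_up _ _ D4) as U4.
  apply Rabs_le_inv in L1. apply Rabs_le_inv in L2. apply Rabs_le_inv in L3. apply Rabs_le_inv in L4.
  assert (H16 : M1 <= 16 * M2).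
  { destruct Hcase as [[E [A [B' C']]]|[[E [A [B' C']]]|[[E [A [B' C']]]|[E [A [B' C']]]]]].
    - assert (Rabs x1 <= 6 * M2) by (apply Rabs_le; lra). lra.
    - assert (Rabs x2 <= 6 * M2) by (apply Rabs_le; lra). lra.
    - assert (Rabs x3 <= 6 * M2) by (apply Rabs_le; lra). lra.
    - assert (Rabs x4 <= 6 * M2) by (apply Rabs_le; lra). lra. }
  assert (HM1 : 1 <= M1) by lra.
  set (t1 := theta th0 N M1). set (t2 := theta th0 N M2). set (t1' := theta th0 N (2 * M1)).
  assert (Ht1 : 1 <= t1) by apply Hge. assert (Ht2 : 1 <= t2) by apply Hge.
  assert (Ht1' : 1 <= t1') by apply Hge.
  assert (HNz : N <> 0) by lra.
  assert (E1 : t1' <= Q * t1).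
  { unfold t1', t1, theta. replace (2 * M1 / N) with (2 * (M1 / N)) by (field; auto).
    apply th0_double; auto. apply Rdiv_le_0_compat; lra. }
  assert (E2 : t1 <= Q ^ 4 * t2).
  { unfold t1, t2, theta.
    apply Rle_trans with (th0 (2 * (2 * (2 * (2 * (M2 / N)))))).
    - apply Hmo. apply Rdiv_le_0_compat; lra.
      replace (2 * (2 * (2 * (2 * (M2 / N))))) with (16 * M2 / N) by (field; auto).
      unfold Rdiv. apply Rmult_le_compat_r; [left; apply Rinv_0_lt_compat; lra|lra].
    - assert (P0 : 0 <= M2 / N) by (apply Rdiv_le_0_compat; lra).
      pose proof (th0_double s th0 Hs Hadm (2 * (2 * (2 * (M2 / N)))) ltac:(lra)) as T1.
      pose proof (th0_double s th0 Hs Hadm (2 * (2 * (M2 / N))) ltac:(lra)) as T2.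
      pose proof (th0_double s th0 Hs Hadm (2 * (M2 / N)) ltac:(lra)) as T3.
      pose proof (th0_double s th0 Hs Hadm (M2 / N) ltac:(lra)) as T4.
      fold Q in T1, T2, T3, T4. simpl.
      assert (0 <= Q) by lra.
      apply Rle_trans with (Q * th0 (2 * (2 * (2 * (M2 / N))))); auto.
      apply Rle_trans with (Q * (Q * th0 (2 * (2 * (M2 / N))))); [apply Rmult_le_compat_l; auto|].
      apply Rle_trans with (Q * (Q * (Q * th0 (2 * (M2 / N))))); [apply Rmult_le_compat_l; auto; apply Rmult_le_compat_l; auto|].
      apply Rle_trans with (Q * (Q * (Q * (Q * th0 (M2 / N))))); [apply Rmult_le_compat_l; auto; apply Rmult_le_compat_l; auto; apply Rmult_le_compat_l; auto|].
      right; ring. }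
  assert (Hsq : t1' ^ 2 <= Q ^ 6 * (t1 * t2)).
  { assert (t1' ^ 2 <= (Q * t1) ^ 2) by (apply pow_incr; lra).
    assert ((Q * t1) ^ 2 = Q ^ 2 * t1 * t1) by ring.
    assert (Q ^ 2 * t1 * t1 <= Q ^ 2 * t1 * (Q ^ 4 * t2)).
    { apply Rmult_le_compat_l; auto. pose proof (pow_le Q 2 ltac:(lra)). nra. }
    assert (Q ^ 2 * t1 * (Q ^ 4 * t2) = Q ^ 6 * (t1 * t2)) by ring.
    lra. }
  assert (HB : 0 < 2 * M1) by lra.
  pose proof (Hpm c N x1 x2 x3 x4 (2 * M1) HN Hsum HB) as Hm.
  assert (Hm' : Rabs (Psi_mult th0 c N x1 x2 x3 x4) <= Rabs c * C0 * (t1' ^ 2 / (2 * M1) ^ 2)).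
  { apply Hm; apply Rabs_le; lra. }
  assert (HX : t1' ^ 2 / (2 * M1) ^ 2 <= Q ^ 6 / 4 * (/ M1 ^ 2 * t1 * t2)).
  { replace (Q ^ 6 / 4 * (/ M1 ^ 2 * t1 * t2)) with (Q ^ 6 * (t1 * t2) / (2 * M1) ^ 2) by (field; lra).
    unfold Rdiv. apply Rmult_le_compat_r; auto. left. apply Rinv_0_lt_compat. apply pow_lt. lra. }
  assert (HP0 : 0 <= / M1 ^ 2 * t1 * t2).
  { repeat apply Rmult_le_pos; try lra. left. apply Rinv_0_lt_compat. apply pow_lt. lra. }
  split; [|split; [auto|split; auto]].
  eapply Rle_trans; [apply psi_abs_le; eauto|].
  assert (Hcc : 0 <= Rabs c * C0) by (apply Rmult_le_pos; auto; apply Rabs_pos).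
  apply Rle_trans with (Rabs c * C0 * (Q ^ 6 / 4 * (/ M1 ^ 2 * t1 * t2)) * Mv).
  - apply Rmult_le_compat_r; auto. eapply Rle_trans; [apply Hm'|]. apply Rmult_le_compat_l; auto.
  - right. field. lra.
Qed.

Theorem proposition4p2 :
  forall (s : R) (th0 : R -> R) (c : R) (Vre Vim : R -> R) (M : R),
    1 <= s ->
    admissible_theta0 s th0 ->
    (forall x, sqrt (Vre x ^ 2 + Vim x ^ 2) <= M) ->
    (* (i): N2* >> N3* *)
    (exists K0 C : R, 1 <= K0 /\ 0 < C /\
      forall (N x1 x2 x3 x4 : R) (k1 k2 k3 k4 : nat) (M1 M2 M3 M4 : R),
        1 < N ->
        x1 + x2 + x3 + x4 = 0 ->
        dyadic_loc k1 x1 -> dyadic_loc k2 x2 ->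
        dyadic_loc k3 x3 -> dyadic_loc k4 x4 ->
        Permutation (2 ^ k1 :: 2 ^ k2 :: 2 ^ k3 :: 2 ^ k4 :: nil)
                    (M1 :: M2 :: M3 :: M4 :: nil) ->
        M2 <= M1 -> M3 <= M2 -> M4 <= M3 ->
        K0 * M3 <= M2 ->
        Psi_abs th0 c N Vre Vim x1 x2 x3 x4
          <= C * (/ M1 ^ 2) * theta th0 N M1 * theta th0 N M2) /\
    (* (ii): N2* ~ N3*, for any comparability constant K *)
    (forall K : R, 1 <= K -> exists C : R, 0 < C /\
      forall (N x1 x2 x3 x4 : R) (k1 k2 k3 k4 : nat) (M1 M2 M3 M4 : R),
        1 < N ->
        x1 + x2 + x3 + x4 = 0 ->
        dyadic_loc k1 x1 -> dyadic_loc k2 x2 ->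
        dyadic_loc k3 x3 -> dyadic_loc k4 x4 ->
        Permutation (2 ^ k1 :: 2 ^ k2 :: 2 ^ k3 :: 2 ^ k4 :: nil)
                    (M1 :: M2 :: M3 :: M4 :: nil) ->
        M2 <= M1 -> M3 <= M2 -> M4 <= M3 ->
        M2 <= K * M3 ->
        Psi_abs th0 c N Vre Vim x1 x2 x3 x4
          <= C * (/ M1 ^ 3) * theta th0 N M1 * theta th0 N M2 * M3 * M4).
Proof.
  intros s th0 c Vre Vim M Hs Hadm HV.
  destruct (core s th0 c Vre Vim M Hs Hadm HV) as [K [HK Hc]].
  split.
  - exists 1, (K + 1). split; [lra|split; [lra|]].
    intros N x1 x2 x3 x4 k1 k2 k3 k4 M1 M2 M3 M4 HN Hsum D1 D2 D3 D4 HP H21 H32 H43 _.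
    destruct (Hc N x1 x2 x3 x4 k1 k2 k3 k4 M1 M2 M3 M4 HN Hsum D1 D2 D3 D4 HP H21 H32 H43)
      as [Hb [_ [_ HP0]]].
    set (P := / M1 ^ 2 * theta th0 N M1 * theta th0 N M2) in *.
    replace ((K + 1) * / M1 ^ 2 * theta th0 N M1 * theta th0 N M2) with ((K + 1) * P) by (unfold P; ring).
    nra.
  - intros Kc HKc. exists (16 * Kc * (K + 1)). split; [nra|].
    intros N x1 x2 x3 x4 k1 k2 k3 k4 M1 M2 M3 M4 HN Hsum D1 D2 D3 D4 HP H21 H32 H43 HK23.
    destruct (Hc N x1 x2 x3 x4 k1 k2 k3 k4 M1 M2 M3 M4 HN Hsum D1 D2 D3 D4 HP H21 H32 H43)
      as [Hb [H16 [HM4 HP0]]].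
    assert (HM1 : 0 < M1) by lra.
    set (R3 := / M1 ^ 3 * theta th0 N M1 * theta th0 N M2).
    assert (ER : / M1 ^ 2 * theta th0 N M1 * theta th0 N M2 = R3 * M1) by (unfold R3; field; lra).
    assert (HR3 : 0 <= R3).
    { assert (0 <= R3 * M1) by lra.
      destruct (Rle_dec 0 R3); auto. nra. }
    rewrite ER in Hb, HP0.
    assert (HM : M1 <= 16 * Kc * (M3 * M4)) by nra.
    assert (R3 * M1 <= R3 * (16 * Kc * (M3 * M4))) by (apply Rmult_le_compat_l; auto).
    replace (16 * Kc * (K + 1) * / M1 ^ 3 * theta th0 N M1 * theta th0 N M2 * M3 * M4)
      with ((K + 1) * (R3 * (16 * Kc * (M3 * M4)))) by (unfold R3; ring).
    assert (0 <= R3 * (16 * Kc * (M3 * M4))) by lra.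
    nra.
Qed.
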